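(* For all positive integers $k,t$, with $\mathcal{S}$ the support partition of $\mathbb{F}_q^k$, $$\frac{2^k q}{4^k(q-1)-a(q-a)}\sum_{s=1}^{\min(k,2t)}(2t+1-s)\binom{k}{s}\;\le\; r_{\mathcal{S}}(k,t)\;\le\; N_q(2^k,2t),$$ where $a=2^k\bmod q$.
   Context: $\mathcal{S}=\{S_A:A\subseteq[k]\}$ with $S_A=\{u\in\mathbb{F}_q^k:\mathrm{supp}(u)=A\}$, $\mathrm{supp}(u)=\{i:u_i\ne0\}$. A $(\mathcal{P},t)$-encoding with redundancy $r$ is a systematic map $\mathcal{C}:\mathbb{F}_q^k\to\mathbb{F}_q^{k+r}$, $\mathcal{C}(u)=(u,p(u))$, with Hamming distance $d(\mathcal{C}(u),\mathcal{C}(v))\ge 2t+1$ whenever $u,v$ lie in different blocks of $\mathcal{P}$; $r_{\mathcal{P}}(k,t)$ is the minimum such $r$. $N_q(M,d)$ denotes the minimum length of a $q$-ary code with $M$ codewords and minimum Hamming distance $d$. *)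

(* Defs.v *)
From Stdlib Require Import ClassicalEpsilon.
From mathcomp Require Import all_boot all_order all_algebra.
Set Implicit Arguments. Unset Strict Implicit. Unset Printing Implicit Defensive.
Import Order.TTheory GRing.Theory Num.Theory.

(* Least natural number satisfying P (chosen classically); meaningful when
   some n satisfies P (then it is the genuine minimum). *)
Definition minnat (P : nat -> Prop) : nat :=
  epsilon (inhabits 0%N) (fun n => P n /\ forall m, P m -> (n <= m)%N).

Section Codes.
Variable F : finFieldType.

Definition hamming (n : nat) (u v : 'rV[F]_n) : nat :=
  #|[pred i : 'I_n | u ord0 i != v ord0 i]|.

Definition supp (k : nat) (u : 'rV[F]_k) : {set 'I_k} :=
  [set i | u ord0 i != 0%R].

Definition sys_enc (k r : nat) (p : 'rV[F]_k -> 'rV[F]_r) (u : 'rV[F]_k)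
  : 'rV[F]_(k + r) := row_mx u (p u).

(* A (P,t)-encoding with redundancy r, the partition P of F^k being given by
   a block-labelling function [blk] (u, v in the same block iff blk u = blk v). *)
Definition is_encoding (L : eqType) (k t r : nat) (blk : 'rV[F]_k -> L)
  (p : 'rV[F]_k -> 'rV[F]_r) : Prop :=
  forall u v : 'rV[F]_k, blk u != blk v ->
    (2 * t + 1 <= hamming (sys_enc p u) (sys_enc p v))%N.

Definition r_P (L : eqType) (k t : nat) (blk : 'rV[F]_k -> L) : nat :=
  minnat (fun r => exists p : 'rV[F]_k -> 'rV[F]_r, is_encoding t blk p).

(* The support partition S = { S_A : A subset [k] }, S_A = {u : supp u = A}. *)
Definition r_S (k t : nat) : nat := r_P t (@supp k).

(* N_q(M,d): minimum length of a q-ary code (alphabet F, q = #|F|) with M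
   codewords and minimum Hamming distance d. *)
Definition N_q (M d : nat) : nat :=
  minnat (fun n => exists C : {set 'rV[F]_n}, #|C| = M /\
     forall x y, x \in C -> y \in C -> x != y -> (d <= hamming x y)%N).

End Codes.

(* Main.v *)
Require Import Defs.
From Stdlib Require Import ClassicalEpsilon Classical.
From mathcomp Require Import all_boot all_order all_algebra zify ring.
Import Order.TTheory GRing.Theory Num.Theory.
Lemma arith1 m x : ((2 * m + 1) * x <= x * x + m * (m + 1))%N.
Proof. case: (leqP x m) => h; nia. Qed.

Lemma sum_pickT (T : finType) (y : T) (G : T -> nat) :
  (\sum_x ((x == y) * G x) = G y)%N.
Proof.
rewrite (bigD1 y) //= eqxx mul1n big1 ?addn0 // => x /negbTE ->; by rewrite mul0n.
Qed.

Lemma sum_count (T : finType) : (\sum_(x : T) 1 = #|T|)%N.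
Proof. by rewrite sum_nat_const muln1. Qed.

Lemma col_eq (T U : finType) (c : T -> U) :
  let n x := (\sum_B (x == c B))%N in
  (\sum_A \sum_B (c A == c B) = \sum_x n x * n x)%N /\ (\sum_x n x = #|T|)%N.
Proof.
move=> n; split.
  rewrite [RHS](eq_bigr (fun x => \sum_A ((x == c A) * n x))%N); last first.
    by move=> x _; rewrite big_distrl.
  rewrite [RHS]exchange_big /=; apply: eq_bigr => A _.
  by rewrite (@sum_pickT _ (c A) n).
rewrite /n exchange_big /= -sum_count; apply: eq_bigr => B _.
by rewrite -[RHS](@sum_pickT _ (c B) (fun=> 1%N)); apply: eq_bigr => x _; rewrite muln1.
Qed.
Lemma arith2 q M X : (0 < q)%N -> ((2 * (M %/ q) + 1) * M <= X + q * ((M %/ q) * (M %/ q + 1)))%N ->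
  (M * M + (M %% q) * (q - M %% q) <= q * X)%N.
Proof.
move=> hq h.
have e := divn_eq M q. have ha := ltn_pmod M hq.
move: h e ha; set m := M %/ q; set a := M %% q => h e ha.
have h' : (q * ((2 * m + 1) * M) <= q * X + q * (q * (m * (m + 1))))%N.
  by rewrite -mulnDr leq_mul2l h orbT.
have [b eb] : exists b, q = (a + b)%N by exists (q - a)%N; rewrite subnKC // ltnW.
have -> : (q - a = b)%N by rewrite eb addKn.
have iden : (q * ((2 * m + 1) * M) = (M * M + a * b) + q * (q * (m * (m + 1))))%N.
  rewrite e eb; ring.
rewrite iden in h'. by rewrite -(leq_add2r (q * (q * (m * (m + 1))))).
Qed.

Lemma plotkin_col (T U : finType) (c : T -> U) : (0 < #|U|)%N ->
 (#|U| * (\sum_A \sum_B (c A != c B)) + (#|T| * #|T| + (#|T| %% #|U|) * (#|U| - #|T| %% #|U|))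
    <= #|U| * (#|T| * #|T|))%N.
Proof.
move=> hq; pose n x := (\sum_B (x == c B))%N.
have [e1 e2] : (\sum_A \sum_B (c A == c B) = \sum_x n x * n x)%N /\ (\sum_x n x = #|T|)%N.
  exact: (@col_eq _ _ c).
set q := #|U| in hq *; set M := #|T| in e2 *.
set X := (\sum_x n x * n x)%N in e1.
have hX : ((2 * (M %/ q) + 1) * M <= X + q * ((M %/ q) * (M %/ q + 1)))%N.
  have -> : ((2 * (M %/ q) + 1) * M = \sum_x (2 * (M %/ q) + 1) * n x)%N.
    by rewrite -big_distrr /= e2.
  rewrite /q -sum_nat_const -big_split /=.
  by apply: leq_sum => x _; apply: arith1.
have := @arith2 q M X hq hX.
have pairs : (\sum_A \sum_B (c A != c B) + \sum_A \sum_B (c A == c B) = M * M)%N.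
  rewrite -big_split /= /M -sum_nat_const; apply: eq_bigr => A _.
  rewrite -big_split /= -sum_count; apply: eq_bigr => B _.
  by case: (c A == c B).
rewrite e1 in pairs.
rewrite -pairs mulnDr. lia.
Qed.

Set Implicit Arguments. Unset Strict Implicit. Unset Printing Implicit Defensive.

Lemma minnat_spec (P : nat -> Prop) n : P n ->
  P (minnat P) /\ forall m, P m -> (minnat P <= m)%N.
Proof.
move=> Pn; rewrite /minnat.
apply: (epsilon_spec (inhabits 0%N) (fun n => P n /\ forall m, P m -> (n <= m)%N)).
suff H : forall N n, (n <= N)%N -> P n -> exists x, P x /\ forall m, P m -> (x <= m)%N.
  exact: (H n n (leqnn n) Pn).
elim=> [|N IH] n0 Hn Pn0.
  exists n0; split=> // m _; move: Hn; lia.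
case: (classic (exists m, P m /\ (m < n0)%N)) => [[m [Pm Hm]]|Hno].
  apply: (IH m) => //; lia.
exists n0; split=> // m Pm; case: (leqP n0 m) => // Hlt.
by exfalso; apply: Hno; exists m.
Qed.

Lemma sum_card (T : finType) (P : pred T) : (\sum_i (P i : nat) = #|P|)%N.
Proof. rewrite -sum1_card [RHS]big_mkcond /=; apply: eq_bigr => i _; by rewrite unfold_in; case: (P i). Qed.

Section S.
Variable F : finFieldType.

Lemma hamming_sum n (u v : 'rV[F]_n) :
  hamming u v = (\sum_i (u ord0 i != v ord0 i : nat))%N.
Proof. by rewrite /hamming -sum_card. Qed.

Lemma hamming_row_mx m n (u1 u2 : 'rV[F]_m) (v1 v2 : 'rV[F]_n) :
  hamming (row_mx u1 v1) (row_mx u2 v2) = (hamming u1 u2 + hamming v1 v2)%N.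
Proof.
rewrite !hamming_sum big_split_ord /=; congr (_ + _)%N; apply: eq_bigr => i _;
  by rewrite ?row_mxEl ?row_mxEr.
Qed.

Lemma hamming_pos n (u v : 'rV[F]_n) : u != v -> (0 < hamming u v)%N.
Proof.
move=> neq; rewrite /hamming.
case: (pickP [pred i : 'I_n | u ord0 i != v ord0 i]) => [i Hi|H].
  by rewrite (cardD1 i) inE; move: Hi => /= ->.
exfalso; move/eqP: neq; apply; apply/rowP => i.
by move: (H i) => /= /negbFE /eqP; rewrite [ord0 in LHS]ord1 /=.  
Qed.


Lemma hamming_refl n (u : 'rV[F]_n) : hamming u u = 0%N.
Proof. by rewrite hamming_sum big1 // => i _; rewrite eqxx. Qed.

Section Rep.
Variables (k t : nat) (hk : (0 < k)%N).

Definition rep (A : {set 'I_k}) : 'rV[F]_((2 * t) * k) :=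
  \row_x (if Ordinal (ltn_pmod x hk) \in A then 1%R else 0%R).

Lemma rep_dist A B : A != B -> (2 * t <= hamming (rep A) (rep B))%N.
Proof.
move=> nAB.
case: (pickP [pred i : 'I_k | (i \in A) != (i \in B)]) => [i Hi|H]; last first.
  exfalso; move/eqP: nAB; apply; apply/setP => i.
  by move: (H i) => /= /negbFE /eqP.
have lt j : (j < 2 * t)%N -> (j * k + i < 2 * t * k)%N.
  move=> hj; have := ltn_ord i; nia.
pose f (j : 'I_(2 * t)) : 'I_(2 * t * k) := Ordinal (lt j (ltn_ord j)).
have finj : injective f.
  move=> j1 j2 /(congr1 val) /= h; apply: val_inj => /=.
  have := ltn_ord i; nia.
rewrite -[X in (X <= _)%N]card_ord -(card_imset _ finj) /hamming.
apply: subset_leq_card; apply/subsetP => x /imsetP [j _ ->] /=.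
rewrite inE /rep !mxE.
have -> : Ordinal (ltn_pmod (f j) hk) = i.
  apply: val_inj => /=; rewrite modnMDl modn_small //.
move: Hi => /=; case: (i \in A); case: (i \in B) => //= _.
  by rewrite oner_eq0.
by rewrite eq_sym oner_eq0.
Qed.

Lemma rep_inj : (0 < t)%N -> injective rep.
Proof.
move=> ht A B eqAB; apply/eqP; apply: contraT => nAB.
by have := rep_dist nAB; rewrite eqAB hamming_refl; lia.
Qed.

Lemma code_exists : (0 < t)%N -> exists n (C : {set 'rV[F]_n}), #|C| = (2 ^ k)%N /\ forall x y, x \in C -> y \in C -> x != y -> (2 * t <= hamming x y)%N.
Proof.
move=> ht; exists (2 * t * k)%N, [set rep A | A : {set 'I_k}]; split.
  rewrite card_imset; last exact: rep_inj.
  by have := card_powerset [set: 'I_k]; rewrite powersetT !cardsT card_ord.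
move=> x y /imsetP [A _ ->] /imsetP [B _ ->] nxy; apply: rep_dist.
by apply: contraNneq nxy => ->.
Qed.
End Rep.

Lemma enc_of_code k t n (C : {set 'rV[F]_n}) : #|C| = (2 ^ k)%N ->
  (forall x y, x \in C -> y \in C -> x != y -> (2 * t <= hamming x y)%N) ->
  exists p : 'rV[F]_k -> 'rV[F]_n, is_encoding t (@supp F k) p.
Proof.
move=> cC dC.
have e : #|{set 'I_k}| = #|C|.
  by rewrite cC; have := card_powerset [set: 'I_k]; rewrite powersetT !cardsT card_ord.
pose g (A : {set 'I_k}) : 'rV[F]_n := @enum_val _ (mem C) (cast_ord e (enum_rank A)).
have gC A : g A \in C by exact: enum_valP.
have ginj : injective g.
  move=> A B /enum_val_inj /(congr1 val) /= h.
  by apply: enum_rank_inj; apply: val_inj.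
exists (fun u => g (supp u)) => u v nuv.
rewrite /sys_enc hamming_row_mx.
have nuv' : u != v by apply: contraNneq nuv => ->.
have h1 := hamming_pos nuv'.
have h2 : (2 * t <= hamming (g (supp u)) (g (supp v)))%N.
  apply: dC => //; apply/negP => /eqP /ginj eq; by rewrite eq eqxx in nuv.
lia.
Qed.
Lemma sum_pick_ord n x (G : nat -> nat) : (x < n)%N ->
  (\sum_(s < n) ((x == s) * G s) = G x)%N.
Proof.
move=> hx; rewrite (bigD1 (Ordinal hx)) //= eqxx mul1n big1 ?addn0 // => s hs.
have /negbTE -> : x != s.
  by apply: contra hs => /eqP e; apply/eqP; apply: val_inj => /=; rewrite e.
by rewrite mul0n.
Qed.

Lemma card_setT k : #|{set 'I_k}| = (2 ^ k)%N.
Proof. by have := card_powerset [set: 'I_k]; rewrite powersetT !cardsT card_ord. Qed.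

Definition uu k (A : {set 'I_k}) : 'rV[F]_k := \row_i (if i \in A then 1%R else 0%R).
Definition sd k (A B : {set 'I_k}) : {set 'I_k} := [set i | (i \in A) != (i \in B)].

Lemma supp_uu k (A : {set 'I_k}) : supp (uu A) = A.
Proof. by apply/setP => i; rewrite inE mxE; case: (i \in A); rewrite ?oner_eq0 ?eqxx. Qed.

Lemma ham_uu k (A B : {set 'I_k}) : hamming (uu A) (uu B) = #|sd A B|.
Proof.
rewrite /hamming; apply: eq_card => i; rewrite !inE !mxE.
by case: (i \in A); case: (i \in B); rewrite ?oner_eq0 ?eqxx // eq_sym oner_eq0.
Qed.

Lemma sd_inv k (A B : {set 'I_k}) : sd A (sd A B) = B.
Proof. by apply/setP => i; rewrite !inE; case: (i \in A); case: (i \in B). Qed.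

Lemma sd_refl k (A : {set 'I_k}) : sd A A = set0.
Proof. by apply/setP => i; rewrite !inE eqxx. Qed.

Section Lower.
Variables (k t : nat).
Definition gg (s : nat) : nat := if s == 0%N then 0%N else (2 * t + 1 - s)%N.

Lemma sumD k' (G : nat -> nat) :
  (\sum_(D : {set 'I_k'}) G #|D| = \sum_(s < k'.+1) 'C(k', s) * G s)%N.
Proof.
have hD (D : {set 'I_k'}) : (#|D| < k'.+1)%N.
  by rewrite ltnS; have := max_card (mem D); rewrite card_ord.
have -> : (\sum_(D : {set 'I_k'}) G #|D| =
    \sum_(D : {set 'I_k'}) \sum_(s < k'.+1) ((#|D| == s) * G s))%N.
  by apply: eq_bigr => D _; rewrite sum_pick_ord.
rewrite exchange_big /=; apply: eq_bigr => s _.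
rewrite -big_distrl /= sum_card; congr (_ * _)%N.
have := card_draws 'I_k' s; rewrite card_ord => <-; apply: eq_card => D; by rewrite !inE.
Qed.

Lemma target_le :
  (\sum_(1 <= s < (minn k (2 * t)).+1) ((2 * t + 1 - s) * 'C(k, s))
    <= \sum_(s < k.+1) 'C(k, s) * gg s)%N.
Proof.
rewrite -(big_mkord xpredT (fun s => 'C(k, s) * gg s)%N).
rewrite [X in (_ <= X)%N]big_ltn // [X in (_ <= _ + X)%N](big_cat_nat (n := (minn k (2 * t)).+1)) //=; last first.
  by rewrite ltnS geq_minl.
rewrite addnA; apply: leq_trans (leq_addr _ _); apply: leq_trans (leq_addl _ _).
rewrite leq_eqVlt; apply/orP; left; apply/eqP.
apply: eq_big_nat => s /andP [h1 _]; rewrite /gg.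
have /negbTE -> : s != 0%N by rewrite -lt0n.
by rewrite mulnC.
Qed.

Lemma lower_nat r (p : 'rV[F]_k -> 'rV[F]_r) : is_encoding t (@supp F k) p ->
  (#|F| * (2 ^ k * \sum_(1 <= s < (minn k (2 * t)).+1) ((2 * t + 1 - s) * 'C(k, s)))
   <= r * (4 ^ k * (#|F| - 1) - (2 ^ k %% #|F|) * (#|F| - 2 ^ k %% #|F|)))%N.
Proof.
move=> enc.
have hq : (0 < #|F|)%N by apply/card_gt0P; exists 0%R.
set S := (\sum_(1 <= s < _) _)%N.
set H := (\sum_(A : {set 'I_k}) \sum_(B : {set 'I_k}) hamming (p (uu A)) (p (uu B)))%N.
have st1 : (\sum_(A : {set 'I_k}) \sum_(B : {set 'I_k}) gg #|sd A B| <= H)%N.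
  apply: leq_sum => A _; apply: leq_sum => B _.
  case: (eqVneq A B) => [->|nAB]; first by rewrite sd_refl cards0.
  have := enc (uu A) (uu B); rewrite !supp_uu nAB /sys_enc hamming_row_mx ham_uu => /(_ isT) h.
  rewrite /gg; case: eqP => // _; lia.
have st2 : (\sum_(A : {set 'I_k}) \sum_(B : {set 'I_k}) gg #|sd A B|
      = 2 ^ k * \sum_(D : {set 'I_k}) gg #|D|)%N.
  rewrite -card_setT -sum_nat_const; apply: eq_bigr => A _.
  rewrite (reindex_inj (can_inj (sd_inv A))) /=; apply: eq_bigr => D _; by rewrite sd_inv.
have st3 : (S <= \sum_(D : {set 'I_k}) gg #|D|)%N by rewrite sumD; exact: target_le.
have eH : H = (\sum_(j < r) \sum_(A : {set 'I_k}) \sum_(B : {set 'I_k})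
          (p (uu A) ord0 j != p (uu B) ord0 j))%N.
  rewrite [RHS]exchange_big; apply: eq_bigr => A _.
  rewrite [RHS]exchange_big; apply: eq_bigr => B _; by rewrite hamming_sum.
have st4 : (#|F| * H <= r * (4 ^ k * (#|F| - 1) - (2 ^ k %% #|F|) * (#|F| - 2 ^ k %% #|F|)))%N.
  rewrite eH big_distrr /= -[r in (_ <= r * _)%N]card_ord -sum_nat_const.
  apply: leq_sum => j _.
  have := @plotkin_col _ _ (fun A : {set 'I_k} => p (uu A) ord0 j) hq.
  rewrite card_setT (_ : 4 ^ k = 2 ^ k * 2 ^ k)%N; last by rewrite -expnMn.
  rewrite [(2 ^ k * 2 ^ k * (_ - 1))%N]mulnBr muln1 [(2 ^ k * 2 ^ k * _)%N]mulnC.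
  move: (\sum_A _)%N (2 ^ k * 2 ^ k)%N (2 ^ k %% #|F| * (#|F| - 2 ^ k %% #|F|))%N => X M2 Y.
  move: (#|F| * X)%N (#|F| * M2)%N => a b; lia.
have : (2 ^ k * S <= H)%N.
  apply: leq_trans st1; rewrite st2 leq_mul2l st3 orbT //.
move=> h; apply: leq_trans st4; by rewrite leq_mul2l h orbT.
Qed.

End Lower.
End S.

Theorem corollary7 (F : finFieldType) (k t : nat) (hk : (0 < k)%N) (ht : (0 < t)%N) :
  let q := #|F| in
  let a := (2 ^ k %% q)%N in
  ((((2 ^ k * q)%N)%:R / (((4 ^ k * (q - 1))%N)%:R - ((a * (q - a))%N)%:R)) *
     (\sum_(1 <= s < (minn k (2 * t)).+1) ((2 * t + 1 - s) * 'C(k, s))%N)%:R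
   <= (r_S F k t)%:R :> rat)%R
  /\ (r_S F k t <= N_q F (2 ^ k) (2 * t))%N.
Proof.
move=> q a.
have [n0 [C [cC dC]]] := @code_exists F k t hk ht.
have [[C' [cC' dC']] _] := @minnat_spec (fun n => exists C : {set 'rV[F]_n}, #|C| = (2 ^ k)%N /\
     forall x y, x \in C -> y \in C -> x != y -> (2 * t <= hamming x y)%N) n0
     (ex_intro _ C (conj cC dC)).
have [p0 enc0] := enc_of_code cC' dC'.
have [[p encp] minr] := @minnat_spec (fun r => exists p : 'rV[F]_k -> 'rV[F]_r,
     is_encoding t (@supp F k) p) _ (ex_intro _ p0 enc0).
split; last first.
  rewrite /r_S /r_P; exact: minr _ (ex_intro _ p0 enc0).
have hl := lower_nat encp.
rewrite -/q -/a in hl.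
rewrite /r_S /r_P.
set r := minnat _ in hl *.
set S := (\sum_(1 <= s < _) _)%N in hl *.
have hq : (0 < q)%N by apply/card_gt0P; exists 0%R.
have hle : (a * (q - a) <= 4 ^ k * (q - 1))%N.
  have ha : (a <= 2 ^ k)%N by exact: leq_mod.
  have h4 : (2 ^ k <= 4 ^ k)%N by rewrite leq_exp2r.
  case: (posnP a) => [->|a0]; first by rewrite mul0n.
  apply: leq_mul; first exact: leq_trans h4.
  lia.
rewrite -natrB //.
move: hl; set D := (4 ^ k * (q - 1) - a * (q - a))%N => hl.
case: (posnP D) => [->|D0].
  by rewrite invr0 mulr0 mul0r ler0n.
rewrite mulrAC ler_pdivrMr ?ltr0n // -!natrM ler_nat.
by rewrite mulnAC mulnC.
Qed.
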